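(* Let $\mathfrak h,\mathfrak n\in\mathrm{Mult}_\rho$, $\mathfrak n\ne\emptyset$, let $a$ be the smallest integer with $\mathfrak n[a]\ne\emptyset$, and suppose $\mathfrak n[a]$ is admissible to $\mathfrak h$. For an enumeration $\Delta_1,\dots,\Delta_k$ of the segments of $\mathfrak n[a]$, set $\mathfrak r_0=\mathfrak h$, $\mathfrak r_i=\mathfrak r(\{\Delta_i,\dots,\Delta_1\},\mathfrak h)$, and consider the multisegment $\{\Upsilon(\Delta_1,\mathfrak r_0),\Upsilon(\Delta_2,\mathfrak r_1),\dots,\Upsilon(\Delta_k,\mathfrak r_{k-1})\}$. This multisegment does not depend on the chosen enumeration of $\mathfrak n[a]$. (It is denoted $\mathfrak{fs}(\mathfrak n,\mathfrak h)$.)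
   Context: Segments: for integers $a\le b$, $[a,b]_\rho$ (think of the integer interval $\{a,\dots,b\}$), with $a(\Delta)=a$, $b(\Delta)=b$, and inclusion of segments as intervals. Two segments are linked if their union is a segment (an interval) and neither contains the other. A multisegment is a finite multiset of nonempty segments; $\mathrm{Mult}_\rho$ is the set of multisegments (including $\emptyset$); $+$ and $-$ denote multiset sum and difference (adding an empty segment does nothing). For $c\in\mathbb Z$, $\mathfrak m[c]$ is the submultisegment of segments $\Delta\in\mathfrak m$ with $a(\Delta)=c$. A sequence of segments $\Delta_1,\dots,\Delta_k$ is ascending if for $i<j$ either $\Delta_i,\Delta_j$ are unlinked or $a(\Delta_i)<a(\Delta_j)$. Write $[x,y]_\rho\prec^L[x',y']_\rho$ if $x<x'$, or $x=x'$ and $y<y'$. A segment $\Delta=[a,b]_\rho$ is admissible to $\mathfrak h$ if $\mathfrak h$ contains a segment $[a,c]_\rho$ with $c\ge b$. Removal process: for $\Delta=[a,b]_\rho$ admissible to $\mathfrak h$, let $\Delta_1=[a_1,b_1]_\rho$ be a shortest segment of $\mathfrak h$ with $a_1=a$ and $b_1\ge b$; recursively, let $\Delta_i=[a_i,b_i]_\rho$ be the $\prec^L$-minimal segment of $\mathfrak h$ with $a_{i-1}<a_i$ and $b\le b_i<b_{i-1}$, stopping when none exists; let $\Delta_1,\dots,\Delta_r$ be the segments obtained (the removal sequence for $(\Delta,\mathfrak h)$). Put $\Delta_i^{tr}=[a_{i+1},b_i]_\rho$ for $i<r$ and $\Delta_r^{tr}=[b+1,b_r]_\rho$ (possibly empty),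 and $\mathfrak r(\Delta,\mathfrak h)=\mathfrak h-\sum_i\Delta_i+\sum_i\Delta_i^{tr}$; also $\Upsilon(\Delta,\mathfrak h)=\Delta_1$. If $\Delta$ is not admissible to $\mathfrak h$, $\mathfrak r(\Delta,\mathfrak h)=\infty$ (a formal symbol), and $\mathfrak r(\Delta,\infty)=\infty$. For $\mathfrak m\in\mathrm{Mult}_\rho$ with segments in ascending order $\Delta_1,\dots,\Delta_k$, $\mathfrak r(\mathfrak m,\mathfrak h)=\mathfrak r(\Delta_k,\dots\mathfrak r(\Delta_1,\mathfrak h)\dots)$ (independent of the ascending order; $\mathfrak r(\emptyset,\mathfrak h)=\mathfrak h$), and $\mathfrak m$ is admissible to $\mathfrak h$ if $\mathfrak r(\mathfrak m,\mathfrak h)\ne\infty$. *)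

(* Defs.v *)
(* Segments [a,b]_rho are encoded by pairs (a,b) of integers;
   multisegments by finite lists of segments, considered up to permutation
   (perm_eq). The formal symbol "infinity" is encoded by [None]. *)
From mathcomp Require Import all_boot all_order all_algebra.
Set Implicit Arguments. Unset Strict Implicit. Unset Printing Implicit Defensive.
Import Order.TTheory GRing.Theory Num.Theory.
Local Open Scope ring_scope.

Definition seg := (int * int)%type.

Definition seg_ne (s : seg) : bool := s.1 <= s.2.

Definition is_mult (m : seq seg) : bool := all seg_ne m.

Definition mult_at (m : seq seg) (c : int) : seq seg := [seq s <- m | s.1 == c].

Definition precL (s t : seg) : bool := (s.1 < t.1) || ((s.1 == t.1) && (s.2 < t.2)).
Definition precLe (s t : seg) : bool := (s == t) || precL s t.

Definition minseg (l : seq seg) : option seg :=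
  foldr (fun x acc => match acc with
                      | None => Some x
                      | Some y => if precLe x y then Some x else Some y end) None l.

Definition admissible_seg (D : seg) (h : seq seg) : bool :=
  has (fun s => (s.1 == D.1) && (D.2 <= s.2)) h.

(* Delta_1: a shortest segment [a,b1] of h with b1 >= b *)
Definition first_removed (D : seg) (h : seq seg) : option seg :=
  minseg [seq s <- h | (s.1 == D.1) && (D.2 <= s.2)].

(* Delta_2, ..., Delta_r : recursion with fuel (b_i strictly decreases, so the
   chain consists of distinct members of h and fuel size h suffices) *)
Fixpoint rem_chain (fuel : nat) (h : seq seg) (b : int) (prev : seg) : seq seg :=
  match fuel with
  | 0%N => [::]
  | S n =>
    match minseg [seq s <- h | (prev.1 < s.1) && (b <= s.2) && (s.2 < prev.2)] with
    | None => [::]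
    | Some d => d :: rem_chain n h b d
    end
  end.

Definition removal_seq (D : seg) (h : seq seg) : option (seq seg) :=
  match first_removed D h with
  | None => None
  | Some d1 => Some (d1 :: rem_chain (size h) h D.2 d1)
  end.

Fixpoint truncs (b : int) (l : seq seg) : seq seg :=
  match l with
  | [::] => [::]
  | [:: d] => [seq s <- [:: (b + 1, d.2)] | seg_ne s]
  | d :: ((d' :: _) as l') => [seq s <- [:: (d'.1, d.2)] | seg_ne s] ++ truncs b l'
  end.

Definition mdiff (h ds : seq seg) : seq seg := foldl (fun acc d => rem d acc) h ds.

Definition rseg (D : seg) (h : seq seg) : option (seq seg) :=
  match removal_seq D h with
  | None => None
  | Some ds => Some (mdiff h ds ++ truncs D.2 ds)
  end.

Definition upsilon (D : seg) (h : option (seq seg)) : option seg :=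
  match h with None => None | Some h' => first_removed D h' end.

(* r(m, h): the segments of m are processed in <=^L order, which is an
   ascending order (strictly increasing starts, and segments with equal start
   are unlinked). *)
Definition rmult (m : seq seg) (h : seq seg) : option (seq seg) :=
  foldl (fun acc D => match acc with None => None | Some h' => rseg D h' end)
        (Some h) (sort precLe m).

Definition admissible_mult (m h : seq seg) : bool := rmult m h != None.

Definition fs_seq (l : seq seg) (h : seq seg) : seq (option seg) :=
  [seq upsilon (nth (0, 0) l i) (rmult (take i l) h) | i <- iota 0 (size l)].

(* Main.v *)
Require Import Defs.
From mathcomp Require Import all_boot all_order all_algebra zify.
Import Order.TTheory GRing.Theory Num.Theory.
Local Open Scope ring_scope.
Set Implicit Arguments. Unset Strict Implicit.

Lemma precLe_trans s t u : precLe s t -> precLe t u -> precLe s u.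
Proof. case: s t u => [x1 y1] [x2 y2] [x3 y3]; rewrite /precLe /precL /= !xpair_eqE. lia. Qed.
Lemma precLe_total s t : precLe s t || precLe t s.
Proof. case: s t => [x1 y1] [x2 y2]; rewrite /precLe /precL /= !xpair_eqE. lia. Qed.
Lemma precLe_anti s t : precLe s t -> precLe t s -> s = t.
Proof. case: s t => [x1 y1] [x2 y2]; rewrite /precLe /precL /= !xpair_eqE => H1 H2.
have [-> ->] : x1 = x2 /\ y1 = y2 by lia. by []. Qed.
Lemma minseg_None l : minseg l = None -> l = [::].
Proof. case: l => //= x l; by case: (minseg l) => // y; case: ifP. Qed.
Lemma minseg_spec l d : minseg l = Some d -> d \in l /\ (forall x, x \in l -> precLe d x).
Proof.
elim: l d => //= x l IH d.
case E: (minseg l) => [y|].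
- have [Hy Hm] := IH _ E.
  case: ifP => Hxy [<-].
  + split; first by rewrite mem_head.
    move=> z; rewrite inE => /orP[/eqP->|Hz]; first by rewrite /precLe eqxx.
    exact: precLe_trans Hxy (Hm _ Hz).
  + split; first by rewrite inE Hy orbT.
    move=> z; rewrite inE => /orP[/eqP->|Hz]; last exact: Hm.
    by have := precLe_total x y; rewrite Hxy.
- move=> [<-]; split; first by rewrite mem_head.
  rewrite (minseg_None E) => z; rewrite inE => /eqP->; by rewrite /precLe eqxx.
Qed.


Lemma minseg_eq l d : d \in l -> (forall x, x \in l -> precLe d x) -> minseg l = Some d.
Proof.
move=> Hd Hm; case E: (minseg l) => [m|]; last by rewrite (minseg_None E) in Hd.
have [Hm1 Hm2] := minseg_spec E.
by rewrite (precLe_anti (Hm2 _ Hd) (Hm _ Hm1)).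
Qed.

Lemma minseg_perm l1 l2 : perm_eq l1 l2 -> minseg l1 = minseg l2.
Proof.
move=> P.
case E1: (minseg l1) => [m|].
- have [H1 H2] := minseg_spec E1.
  symmetry; apply: minseg_eq; first by rewrite -(perm_mem P).
  by move=> x; rewrite -(perm_mem P); apply: H2.
- have := minseg_None E1 => e; subst l1.
  by move: (perm_size P); clear P; case: l2.
Qed.

Lemma perm_rem (x : seg) s1 s2 : perm_eq s1 s2 -> perm_eq (rem x s1) (rem x s2).
Proof.
move=> P; case: (boolP (x \in s1)) => Hx.
- have Hx2 : x \in s2 by rewrite -(perm_mem P).
  rewrite -(perm_cons x); apply: perm_trans (perm_to_rem Hx2).
  by rewrite perm_sym; apply: perm_trans (perm_to_rem Hx); rewrite perm_sym.
- have Hx2 : x \notin s2 by rewrite -(perm_mem P).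
  by rewrite !rem_id.
Qed.

Lemma filter_rem_out (p : pred seg) x s : ~~ p x -> filter p (rem x s) = filter p s.
Proof.
move=> Hp; elim: s => //= y s IH.
case: (eqVneq y x) => [->|_] /=; first by rewrite (negbTE Hp).
by rewrite IH.
Qed.

Lemma filter_rem_in (p : pred seg) x s : p x -> filter p (rem x s) = rem x (filter p s).
Proof.
move=> Hp; elim: s => //= y s IH.
case: (eqVneq y x) => [->|ne] /=; first by rewrite Hp /= eqxx.
case: ifP => //= _; by rewrite (negbTE ne) IH.
Qed.

Lemma rem_comm (x y : seg) s : rem x (rem y s) = rem y (rem x s).
Proof.
elim: s => //= z s IH.
have [zy|nzy] := eqVneq z y; have [zx|nzx] := eqVneq z x => /=.
- by rewrite -zx -zy.
- by rewrite zy eqxx.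
- by rewrite zx eqxx.
- by rewrite (negbTE nzx) (negbTE nzy) IH.
Qed.

Definition step (D : seg) (o : option (seq seg)) : option (seq seg) :=
  match o with None => None | Some E =>
    match first_removed D E with None => None | Some d => Some (rem d E) end end.
Definition stepf o D := step D o.

Lemma fr_spec D E d : first_removed D E = Some d ->
  [/\ d \in E, d.1 = D.1, D.2 <= d.2 &
      forall s, s \in E -> s.1 = D.1 -> D.2 <= s.2 -> d.2 <= s.2].
Proof.
rewrite /first_removed => /minseg_spec [].
rewrite mem_filter => /andP[/andP[/eqP H1 H2] H3] Hm.
split => // s Hs Hs1 Hs2.
have : precLe d s by apply: Hm; rewrite mem_filter Hs Hs1 eqxx Hs2.
move: H1 Hs1; case: d {H2 H3 Hm} => x y; case: s {Hs Hs2} => u v /= -> ->.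
rewrite /precLe /precL /= !xpair_eqE; lia.
Qed.

Lemma fr_eq D E d : d \in E -> d.1 = D.1 -> D.2 <= d.2 ->
  (forall s, s \in E -> s.1 = D.1 -> D.2 <= s.2 -> d.2 <= s.2) ->
  first_removed D E = Some d.
Proof.
move=> H1 H2 H3 H4; apply: minseg_eq; first by rewrite mem_filter H1 H2 eqxx H3.
move=> x; rewrite mem_filter => /andP[/andP[/eqP Hx1 Hx2] Hx].
have := H4 _ Hx Hx1 Hx2; move: H2 Hx1; case: d {H1 H3 H4} => u v; case: x {Hx Hx2} => p q /= -> ->.
rewrite /precLe /precL /= !xpair_eqE; lia.
Qed.

Lemma fr_None D E : first_removed D E = None ->
  forall s, s \in E -> s.1 = D.1 -> s.2 < D.2.
Proof.
rewrite /first_removed => /minseg_None Hf s Hs Hs1.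
rewrite ltNge; apply/negP => Hs2.
have : s \in [seq s <- E | (s.1 == D.1) && (D.2 <= s.2)] by rewrite mem_filter Hs Hs1 eqxx Hs2.
by rewrite Hf.
Qed.

Lemma fr_Nonec D E : (forall s, s \in E -> s.1 = D.1 -> s.2 < D.2) ->
  first_removed D E = None.
Proof.
move=> H; case F: (first_removed D E) => [d|] //.
case: (fr_spec F) => Hd Hd1 Hd2 _.
by have := H _ Hd Hd1; rewrite ltNge Hd2.
Qed.

Lemma fr_perm D E1 E2 : perm_eq E1 E2 -> first_removed D E1 = first_removed D E2.
Proof. by move=> P; apply: minseg_perm; apply: perm_filter. Qed.

Lemma mem_rem_neq (x y : seg) s : x != y -> x \in s -> x \in rem y s.
Proof.
move=> ne Hx; case: (boolP (y \in s)) => Hy; last by rewrite rem_id.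
by move: Hx; rewrite (perm_mem (perm_to_rem Hy)) inE (negbTE ne).
Qed.

Lemma step_comm_le D1 D2 o : D1.1 = D2.1 -> D1.2 <= D2.2 ->
  step D1 (step D2 o) = step D2 (step D1 o).
Proof.
move=> Hc Hle; case: o => [E|] //; rewrite /step.
case F1: (first_removed D1 E) => [e1|].
- case: (fr_spec F1) => He1 He11 He12 He1m.
  case: (boolP (e1.2 < D2.2)) => Hlt.
  + have Hr : first_removed D2 (rem e1 E) = first_removed D2 E.
      rewrite /first_removed filter_rem_out //.
      by rewrite negb_and -ltNge Hlt orbT.
    rewrite Hr.
    case F2: (first_removed D2 E) => [f2|] //=.
    case: (fr_spec F2) => Hf2 Hf21 Hf22 Hf2m.
    rewrite (@fr_eq D1 (rem f2 E) e1) //; first by rewrite rem_comm.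
    * apply: mem_rem_neq => //; apply/eqP => E12.
      by move: Hlt; rewrite E12 ltNge Hf22.
    * move=> s /mem_rem Hs; exact: He1m.
  + rewrite -leNgt in Hlt.
    rewrite (@fr_eq D2 E e1) //=; last 2 first.
    * by rewrite He11.
    * move=> s Hs Hs1 Hs2; apply: He1m => //; first by rewrite Hc.
      exact: le_trans Hle Hs2.
    * congr (match _ with None => _ | Some d => _ end).
      rewrite /first_removed; congr minseg; apply: eq_in_filter => x /mem_rem Hx.
      rewrite Hc; case: (eqVneq x.1 D2.1) => //= Hx1.
      apply/idP/idP => H.
      - apply: le_trans Hlt _; apply: He1m => //; by rewrite Hc.
      - exact: le_trans Hle H.
- have F2 : first_removed D2 E = None.
    apply: fr_Nonec => s Hs Hs1.
    have := fr_None F1 Hs; rewrite Hc => /(_ Hs1) H.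
    exact: lt_le_trans H Hle.
  by rewrite F2.
Qed.

Lemma step_comm D1 D2 o : D1.1 = D2.1 -> step D1 (step D2 o) = step D2 (step D1 o).
Proof.
move=> Hc; case: (lerP D1.2 D2.2) => H; first exact: step_comm_le.
by symmetry; apply: step_comm_le => //; apply: ltW.
Qed.

Lemma foldl_None l : foldl stepf None l = None.
Proof. by elim: l. Qed.

Lemma fold_move c x s o : x.1 = c -> (forall D, D \in s -> D.1 = c) ->
  step x (foldl stepf o s) = foldl stepf (step x o) s.
Proof.
elim: s o => //= y s IH o Hx Hs.
rewrite IH //; last by move=> D HD; apply: Hs; rewrite inE HD orbT.
congr foldl; rewrite /stepf step_comm //; by rewrite Hx (Hs y) // mem_head.
Qed.

Lemma fold_perm c l1 l2 o : (forall D, D \in l1 -> D.1 = c) -> perm_eq l1 l2 ->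
  foldl stepf o l1 = foldl stepf o l2.
Proof.
elim: l1 l2 o => [|x l1 IH] l2 o H P; first by move: (perm_size P); clear P; case: l2.
have Hx : x \in l2 by rewrite -(perm_mem P) mem_head.
have H2 : forall D, D \in l2 -> D.1 = c by move=> D; rewrite -(perm_mem P); apply: H.
move: P H2; case/splitPr: Hx => s t P H2.
have P' : perm_eq l1 (s ++ t).
  rewrite -(perm_cons x); apply: perm_trans P _.
  by rewrite -cat1s perm_catCA.
rewrite /= (IH _ _ _ P'); last by move=> D HD; apply: H; rewrite inE HD orbT.
rewrite foldl_cat -(@fold_move c) ?foldl_cat //=.
- by apply: H2; rewrite mem_cat mem_head orbT.
- by move=> D HD; apply: H2; rewrite mem_cat HD.
Qed.

Definition Rel (a : int) (o1 o2 : option (seq seg)) : Prop :=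
  match o1, o2 with
  | None, None => True
  | Some h1, Some E => perm_eq (mult_at h1 a) E
  | _, _ => False end.

Lemma chain_gt fuel h b p : all (fun d : seg => p.1 < d.1) (rem_chain fuel h b p).
Proof.
elim: fuel p => //= n IH p.
case E: (minseg _) => [d|] //=.
have [Hd _] := minseg_spec E.
move: Hd; rewrite mem_filter => /andP[/andP[/andP[Hpd _] _] _].
rewrite Hpd /=; apply: sub_all (IH d) => x Hx; exact: lt_trans Hpd Hx.
Qed.

Lemma truncs_gt (a b : int) l : a <= b ->
  all (fun s : seg => a < s.1) (behead l) -> all (fun s : seg => a < s.1) (truncs b l).
Proof.
move=> Hab; elim: l => // d l IH.
case: l IH => [|d' l''] IH /=.
- move=> _; rewrite /seg_ne /=; case: ifP => //= _; rewrite andbT; lia.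
- move=> /andP[Hd' Hl]; rewrite all_cat; apply/andP; split.
  + by rewrite /=; case: ifP => //= _; rewrite Hd'.
  + by apply: IH.
Qed.

Lemma mult_at_nil (a : int) l : all (fun s : seg => a < s.1) l -> mult_at l a = [::].
Proof.
move=> H; rewrite /mult_at -(filter_pred0 l); apply: eq_in_filter => x Hx /=.
have := allP H x Hx; case: (eqVneq x.1 a) => // ->; by rewrite ltxx.
Qed.

Lemma mult_at_mdiff (a : int) ch X : all (fun s : seg => a < s.1) ch ->
  mult_at (foldl (fun acc d => rem d acc) X ch) a = mult_at X a.
Proof.
elim: ch X => //= c ch IH X /andP[Hc Hch].
rewrite IH // /mult_at filter_rem_out //; apply/eqP => E; by rewrite E ltxx in Hc.
Qed.

Lemma fr_mult (a : int) D h1 : D.1 = a -> first_removed D h1 = first_removed D (mult_at h1 a).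
Proof.
move=> Ha; rewrite /first_removed /mult_at -filter_predI; congr minseg.
apply: eq_filter => s /=; rewrite Ha; by case: (s.1 == a); rewrite /= ?andbT.
Qed.

Lemma mult_at_cat (a : int) x y : mult_at (x ++ y) a = mult_at x a ++ mult_at y a.
Proof. exact: filter_cat. Qed.

Lemma key (a b : int) d1 ch h1 : d1.1 = a -> a <= b -> all (fun s : seg => a < s.1) ch ->
  mult_at (mdiff h1 (d1 :: ch) ++ truncs b (d1 :: ch)) a = rem d1 (mult_at h1 a).
Proof.
move=> Hd Hab Hch.
rewrite mult_at_cat (mult_at_nil (@truncs_gt a b (d1 :: ch) Hab Hch)) cats0.
rewrite (_ : mdiff h1 (d1 :: ch) = foldl (fun acc d => rem d acc) (rem d1 h1) ch) //.
rewrite mult_at_mdiff // /mult_at filter_rem_in //; by rewrite Hd.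
Qed.

Lemma rseg_Rel (a : int) D h1 E : D.1 = a -> a <= D.2 -> perm_eq (mult_at h1 a) E ->
  Rel a (rseg D h1) (step D (Some E)).
Proof.
move=> Ha Hb P.
have Hf : first_removed D h1 = first_removed D E by rewrite (fr_mult _ Ha); apply: fr_perm.
rewrite /rseg /removal_seq /step -Hf.
case F: (first_removed D h1) => [d1|] //.
case: (fr_spec F) => Hd1 Hd11 _ _.
have Hch := chain_gt (size h1) h1 D.2 d1; rewrite Hd11 Ha in Hch.
rewrite /Rel key //; last by rewrite Hd11.
exact: perm_rem.
Qed.

Lemma rmult_Rel (a : int) l o1 o2 : (forall D, D \in l -> D.1 = a /\ a <= D.2) ->
  Rel a o1 o2 ->
  Rel a (foldl (fun acc D => match acc with None => None | Some h' => rseg D h' end) o1 l)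
        (foldl stepf o2 l).
Proof.
elim: l o1 o2 => //= D l IH o1 o2 H HR.
have [Ha Hb] := H D (mem_head _ _).
apply: IH; first by move=> x Hx; apply: H; rewrite inE Hx orbT.
case: o1 o2 HR => [h1|] [E|] //= HR.
exact: rseg_Rel.
Qed.

Definition oup (D : seg) (o : option (seq seg)) :=
  match o with None => None | Some E => first_removed D E end.

Lemma upsilon_Rel (a : int) D o1 o2 : D.1 = a -> Rel a o1 o2 -> upsilon D o1 = oup D o2.
Proof.
move=> Ha; case: o1 o2 => [h1|] [E|] //= P.
rewrite (fr_mult _ Ha); exact: fr_perm.
Qed.

Fixpoint outs (o : option (seq seg)) (l : seq seg) : seq (option seg) :=
  match l with [::] => [::] | D :: l' => oup D o :: outs (step D o) l' end.

Lemma map_outs l o :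
  [seq oup (nth (0, 0) l i) (foldl stepf o (take i l)) | i <- iota 0 (size l)] = outs o l.
Proof.
elim: l o => //= D l IH o.
congr cons.
rewrite -{1}[1%N]addn0 iotaDl -map_comp -IH; apply: eq_map => i /=.
by [].
Qed.

Lemma outs_spec l E : foldl stepf (Some E) l != None ->
  exists ds Ef, [/\ outs (Some E) l = map Some ds, foldl stepf (Some E) l = Some Ef &
                    perm_eq E (ds ++ Ef)].
Proof.
elim: l E => [|D l IH] E /=; first by move=> _; exists [::], E.
rewrite {1 2}/stepf /step.
case F: (first_removed D E) => [d|]; last by rewrite foldl_None.
move=> /IH [ds [Ef [H1 H2 H3]]].
exists (d :: ds), Ef; split => //=; first by rewrite H1.
case: (fr_spec F) => Hd _ _ _.
apply: perm_trans (perm_to_rem Hd) _; by rewrite /= perm_cons.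
Qed.

Lemma fs_eq (a : int) l h : (forall D, D \in l -> D.1 = a /\ a <= D.2) ->
  fs_seq l h = outs (Some (mult_at h a)) l.
Proof.
move=> Hl; rewrite /fs_seq -map_outs; apply/eq_in_map => i; rewrite mem_iota add0n => /andP[_ Hi].
have Hn : nth (0, 0) l i \in l by rewrite mem_nth.
have Ht : forall D, D \in take i l -> D.1 = a /\ a <= D.2 by move=> D /mem_take; apply: Hl.
apply: (upsilon_Rel (a:=a)); first by case: (Hl _ Hn).
rewrite (@fold_perm a (take i l) (sort precLe (take i l))); last 2 first.
- by move=> D /Ht [].
- by rewrite perm_sym perm_sort.
apply: rmult_Rel; last exact: perm_refl.
by move=> D; rewrite mem_sort; apply: Ht.
Qed.

Theorem mainTheorem3 (h n : seq seg) (a : int) :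
  is_mult h -> is_mult n -> n != [::] ->
  mult_at n a != [::] ->
  (forall s, s \in n -> a <= s.1) ->
  admissible_mult (mult_at n a) h ->
  forall l1 l2 : seq seg,
    perm_eq l1 (mult_at n a) -> perm_eq l2 (mult_at n a) ->
    perm_eq (fs_seq l1 h) (fs_seq l2 h).
Proof.
move=> _ Hn _ _ _ Hadm l1 l2 P1 P2.
set m := mult_at n a.
have Hm : forall D, D \in m -> D.1 = a /\ a <= D.2.
  move=> D; rewrite mem_filter => /andP[/eqP H1 H2]; split => //.
  by rewrite -H1; apply: (allP Hn).
have Hm1 : forall D, D \in m -> D.1 = a by move=> D /Hm [].
have HR := @rmult_Rel a (sort precLe m) (Some h) (Some (mult_at h a)).
have HR' : Rel a (rmult m h) (foldl stepf (Some (mult_at h a)) m).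
  rewrite (@fold_perm a m (sort precLe m)); last 2 first.
  - exact: Hm1.
  - by rewrite perm_sym perm_sort.
  apply: HR; last exact: perm_refl.
  by move=> D; rewrite mem_sort; apply: Hm.
have Hne : foldl stepf (Some (mult_at h a)) m != None.
  move: Hadm HR'; rewrite /admissible_mult.
  by case: (rmult m h); case: (foldl _ _ m).
have Hl1 : forall D, D \in l1 -> D.1 = a /\ a <= D.2 by move=> D; rewrite (perm_mem P1); apply: Hm.
have Hl2 : forall D, D \in l2 -> D.1 = a /\ a <= D.2 by move=> D; rewrite (perm_mem P2); apply: Hm.
have E1 : foldl stepf (Some (mult_at h a)) l1 = foldl stepf (Some (mult_at h a)) m.
  by apply: (@fold_perm a) => // D /Hl1 [].
have E2 : foldl stepf (Some (mult_at h a)) l2 = foldl stepf (Some (mult_at h a)) m.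
  by apply: (@fold_perm a) => // D /Hl2 [].
rewrite (fs_eq h Hl1) (fs_eq h Hl2).
have [ds1 [Ef1 [O1 F1 Q1]]] := @outs_spec l1 (mult_at h a) ltac:(by rewrite E1).
have [ds2 [Ef2 [O2 F2 Q2]]] := @outs_spec l2 (mult_at h a) ltac:(by rewrite E2).
have EE : Ef1 = Ef2 by move: F1 F2; rewrite E1 E2 => -> [].
subst Ef2; rewrite O1 O2; apply: perm_map.
rewrite -(perm_cat2r Ef1); apply: perm_trans Q2; by rewrite perm_sym.
Qed.
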